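(* Let $(\mathcal{G},\mathcal{C})$ be an acyclic network with unit-delay links and a set of connections (sink demands) as described in the context. Suppose an assignment of local encoding coefficients (LECs) from $\mathbb{F}_{p^m}$ is a feasible network code for $(\mathcal{G},\mathcal{C})$. Let $\alpha\in\mathbb{F}_{p^a}$ (for some positive integer $a$) have multiplicative order $n$, and view the LECs as elements of $\mathbb{F}_{p^b}$, $b=\mathrm{LCM}(a,m)$. Then these LECs together with $\alpha$ form a feasible transform network code for $(\mathcal{G},\mathcal{C})$ if and only if $f(\alpha^t)\neq 0$ for all $0\le t\le n-1$, where $f(D)=\prod_{j=1}^{r}\det\big(M_j'(D)\big)$.
   Context: Network model: $\mathcal{G}=(V,E)$ is a finite directed acyclic graph (parallel links allowed); each link carries one symbol of a finite field $K$ of characteristic $p$ per time unit with a delay of one time unit. There are $s$ sources; source $i$ generates $\mu_i$ input processes; there are $r$ sinks; sink $j$ has $\nu_j$ output processes. A linear network code assigns LECs in $K$: for a link $e$ with tail $v$, $Z^{(t+1)}(e)=\sum_{l}\alpha_{l,e}X^{(t)}(v,l)+\sum_{e':\mathrm{head}(e')=v}\beta_{e',e}Z^{(t)}(e')$ (first sum present only if $v$ is a source), and at a sink $v'$, $Y^{(t+1)}(v',l)=\sum_{e':\mathrm{head}(e')=v'}\epsilon_{e',l}Z^{(t)}(e')$. Writing processes as power series in $D$, the output vector of sink $j$ is $\sum_i \tilde M_{ij}(D)\underline{X_i}(D)$ with $\tilde M_{ij}(D)\in K[D]^{\nu_j\times\mu_i}$. Let $d'_{min}$ be the smallest power of $D$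 occurring in any $\tilde M_{ij}(D)$ and define $M_{ij}(D)=D^{-d'_{min}}\tilde M_{ij}(D)=\sum_{d=0}^{d_{max}}M_{ij}^{(d)}D^d$, and $M_j(D)=[M_{1j}(D)\ \cdots\ M_{sj}(D)]$ ($\nu_j\times\mu$, $\mu=\sum_i\mu_i$). The connections $\mathcal{C}$ specify for each sink $j$ a set of exactly $\nu_j$ input processes it demands; $M_j'(D)$ is the $\nu_j\times\nu_j$ submatrix of $M_j(D)$ formed by the columns of the demanded processes. A feasible network code is an LEC assignment such that (zero interference) every column of $M_j(D)$ corresponding to an input process not demanded by sink $j$ is zero, for every $j$, and (invertibility) $\det M_j'(D)\neq 0$ in $K(D)$ for every $j$. Transform approach: for $\alpha$ of multiplicative order $n$ in an extension of $K$ and $0\le t\le n-1$, let $\hat M_j^{(t)}=\sum_{d=0}^{d_{max}}\alpha^{(n-1-t)d}M_j^{(d)}$ (where $M_j(D)=\sum_d M_j^{(d)}D^d$); this is the instantaneous transfer matrix of generation $t$ obtained after adding a cyclic prefix of length $d_{max}$, applying a length-$n$ DFT at the sources and inverse DFT at the sinks. The LECs together with $\alpha$ form a feasible transform network code if for every $t\in\{0,\dots,n-1\}$ and every sink $j$: every column of $\hat M_j^{(t)}$ corresponding to an undemanded process is zero, and the $\nu_j\times\nu_j$ submatrix of $\hat M_j^{(t)}$ formed by the demanded columns is nonsingular. *)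

(* Defs.v *)
From HB Require Import structures.
From mathcomp Require Import all_boot all_order all_algebra.
Unset Printing Implicit Defensive.
Import GRing.Theory.
Local Open Scope ring_scope.

(* Nodes: finType V; links: finType E (parallel links allowed), each link e
   goes from [tl e] to [hd e]. *)
Section Graph.
Variables (V E : finType) (tl hd : E -> V).

Definition adj : rel V := fun u v => [exists e, (tl e == u) && (hd e == v)].

Definition acyclic : Prop := forall e : E, ~~ connect adj (hd e) (tl e).
End Graph.

Section Code.
Variables (L : fieldType) (V E : finType) (tl hd : E -> V).
Variables (s r : nat) (mu : 'I_s -> nat) (nu : 'I_r -> nat).
Variables (src : 'I_s -> V) (snk : 'I_r -> V).

(* input process l of source i *)
Definition proc : finType := {i : 'I_s & 'I_(mu i)}.

(* LECs: alph x e = alpha_{l,e} for x = (i,l) (used only if tl e = src i),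
   beta e' e = beta_{e',e} (used only if hd e' = tl e),
   eps j e' l = epsilon_{e',l} at sink j (used only if hd e' = snk j). *)
Variables (alph : proc -> E -> L) (beta : E -> E -> L)
          (eps : forall j : 'I_r, E -> 'I_(nu j) -> L).

(* D-domain transfer from input process x to link e via paths of exactly
   k+1 links (each link contributes one delay D = 'X). *)
Fixpoint ltf (k : nat) : E -> proc -> {poly L} :=
  fun e x =>
  match k with
  | 0 => if tl e == src (tag x) then (alph x e)%:P * 'X else 0
  | k'.+1 => 'X * \sum_(e' : E | hd e' == tl e) (beta e' e)%:P * ltf k' e' x
  end.

(* Z(e)(D) as a linear function of the input processes: the (unique, the
   graph being acyclic) solution of
   Z(e) = D (sum_l alpha_{l,e} X(tl e,l) + sum_{hd e' = tl e} beta_{e',e} Z(e')),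
   obtained by unrolling (paths have at most #|E| links). *)
Definition link_tf (e : E) (x : proc) : {poly L} := \sum_(k < #|E|) ltf k e x.

(* entry (a, x) of [~M_{i j}(D)], x = (i, l): Y(snk j, a) = D sum eps Z *)
Definition Mtilde (j : 'I_r) (a : 'I_(nu j)) (x : proc) : {poly L} :=
  'X * \sum_(e' : E | hd e' == snk j) (eps j e' a)%:P * link_tf e' x.

Definition pval (q : {poly L}) : nat := find (fun c => c != 0) q.

Definition dmaxT : nat :=
  \max_(j : 'I_r) \max_(a : 'I_(nu j)) \max_(x : proc) (size (Mtilde j a x)).-1.

(* d'_min: smallest power of D occurring in any entry of any ~M_{ij}
   (dmaxT is only a neutral upper bound for the minimum) *)
Definition dmin : nat :=
  \big[minn/dmaxT]_(j : 'I_r) \big[minn/dmaxT]_(a : 'I_(nu j))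
     \big[minn/dmaxT]_(x : proc | Mtilde j a x != 0) pval (Mtilde j a x).

(* M_{ij}(D) = D^{-d'_min} ~M_{ij}(D) *)
Definition Mnet (j : 'I_r) (a : 'I_(nu j)) (x : proc) : {poly L} :=
  \poly_(d < size (Mtilde j a x)) (Mtilde j a x)`_(d + dmin).

Definition dmax : nat :=
  \max_(j : 'I_r) \max_(a : 'I_(nu j)) \max_(x : proc) (size (Mnet j a x)).-1.

(* Connections: sink j demands the nu_j (distinct) processes dem j b *)
Variable dem : forall j : 'I_r, 'I_(nu j) -> proc.

Definition Mprime (j : 'I_r) : 'M[{poly L}]_(nu j) :=
  \matrix_(a, b) Mnet j a (dem j b).

(* feasible network code (det <> 0 in {poly L}, equivalently in K(D)) *)
Definition feasible : Prop :=
  forall j : 'I_r,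
    (forall x : proc, x \notin codom (dem j) ->
       forall a : 'I_(nu j), Mnet j a x = 0)
    /\ \det (Mprime j) != 0.

Definition Mhat (n : nat) (alpha : L) (t : nat) (j : 'I_r) (a : 'I_(nu j))
  (x : proc) : L :=
  \sum_(d < dmax.+1) alpha ^+ ((n.-1 - t) * d) * (Mnet j a x)`_d.

Definition Mhatprime (n : nat) (alpha : L) (t : nat) (j : 'I_r) : 'M[L]_(nu j) :=
  \matrix_(a, b) Mhat n alpha t j a (dem j b).

Definition transform_feasible (n : nat) (alpha : L) : Prop :=
  forall t : nat, (t < n)%N -> forall j : 'I_r,
    (forall x : proc, x \notin codom (dem j) ->
       forall a : 'I_(nu j), Mhat n alpha t j a x = 0)
    /\ \det (Mhatprime n alpha t j) != 0.

Definition fpoly : {poly L} := \prod_(j : 'I_r) \det (Mprime j).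

End Code.

Arguments proc {s} mu.
Arguments feasible {L V E} tl hd {s r mu nu} src snk alph beta eps dem.
Arguments transform_feasible {L V E} tl hd {s r mu nu} src snk alph beta eps dem n alpha.
Arguments fpoly {L V E} tl hd {s r mu nu} src snk alph beta eps dem.
Arguments acyclic {V E} tl hd.

(* Main.v *)
Require Import Defs.
From HB Require Import structures.
From mathcomp Require Import all_boot all_order all_algebra.
Import GRing.Theory.
Local Open Scope ring_scope.

Theorem lemma2
  (p m a : nat) (L : finFieldType)
  (V E : finType) (tl hd : E -> V)
  (s r : nat) (mu : 'I_s -> nat) (nu : 'I_r -> nat)
  (src : 'I_s -> V) (snk : 'I_r -> V)
  (alph : proc mu -> E -> L) (beta : E -> E -> L)
  (eps : forall j : 'I_r, E -> 'I_(nu j) -> L)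
  (dem : forall j : 'I_r, 'I_(nu j) -> proc mu)
  (alpha : L) (n : nat) :
  prime p -> (0 < m)%N -> (0 < a)%N ->
  #|L| = (p ^ lcmn a m)%N ->
  acyclic tl hd -> injective src -> injective snk ->
  (forall j, injective (dem j)) ->
  (* the LECs lie in the subfield F_{p^m} of L = F_{p^b} *)
  (forall x e, alph x e ^+ (p ^ m) = alph x e) ->
  (forall e' e, beta e' e ^+ (p ^ m) = beta e' e) ->
  (forall j e' l, eps j e' l ^+ (p ^ m) = eps j e' l) ->
  feasible tl hd src snk alph beta eps dem ->
  (* alpha lies in the subfield F_{p^a} and has multiplicative order n *)
  alpha ^+ (p ^ a) = alpha ->
  n.-primitive_root alpha ->
  (transform_feasible tl hd src snk alph beta eps dem n alpha <->
   (forall t : nat, (t < n)%N ->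
      (fpoly tl hd src snk alph beta eps dem).[alpha ^+ t] != 0)).
Proof.
move=> _ _ _ _ _ _ _ _ _ _ _ Hfeas _ Hprim.
have n_gt0 := prim_order_gt0 Hprim.
set g := fun t : nat => alpha ^+ (n.-1 - t).
have HM : forall t j a0 x, Mhat _ _ _ tl hd _ _ _ _ src snk alph beta eps n alpha t j a0 x
    = (Mnet _ _ _ tl hd _ _ _ _ src snk alph beta eps j a0 x).[g t].
  move=> t j a0 x; rewrite /Mhat (horner_coef_wide _ (n := (dmax _ _ _ tl hd _ _ _ _ src snk alph beta eps).+1)).
    by apply: eq_bigr => d _; rewrite mulrC /g -exprM.
  rewrite (leq_trans (leqSpred _)) // ltnS /dmax.
  apply: (leq_trans _ (leq_bigmax j)).
  apply: (leq_trans _ (leq_bigmax a0)).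
  exact: (leq_bigmax x).
have Hdet : forall t j, \det (Mhatprime _ _ _ tl hd _ _ _ _ src snk alph beta eps dem n alpha t j)
    = (\det (Mprime _ _ _ tl hd _ _ _ _ src snk alph beta eps dem j)).[g t].
  move=> t j; rewrite -horner_evalE -det_map_mx; congr (\det _).
  by apply/matrixP => a0 b; rewrite !mxE HM ?horner_evalE.
have Hf : forall t, (fpoly tl hd src snk alph beta eps dem).[g t] != 0 <->
    forall j, (\det (Mprime _ _ _ tl hd _ _ _ _ src snk alph beta eps dem j)).[g t] != 0.
  move=> t; rewrite /fpoly -horner_evalE rmorph_prod.
  split.
    move=> H j; apply: contra H => /eqP H0.
    by rewrite (bigD1 j) //= ?horner_evalE H0 mul0r.
  move=> H; rewrite prodf_seq_neq0; apply/allP => j _ /=.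
  by rewrite ?horner_evalE.
split.
- move=> HT t ltn.
  have lt' : (n.-1 - t < n)%N by rewrite (leq_ltn_trans (leq_subr t n.-1)) // ltn_predL.
  have H := proj2 (Hf (n.-1 - t)%N).
  have -> : alpha ^+ t = g (n.-1 - t)%N by rewrite /g subKn // -ltnS prednK.
  apply: H => j; rewrite -Hdet; exact: (proj2 (HT _ lt' j)).
- move=> HF t ltn j; split.
    by move=> x Hx a0; rewrite HM (proj1 (Hfeas j) x Hx a0) horner0.
  rewrite Hdet; apply: (proj1 (Hf t) _ j).
  have lt' : (n.-1 - t < n)%N by rewrite (leq_ltn_trans (leq_subr t n.-1)) // ltn_predL.
  exact: HF.
Qed.
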